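(* Let $p,q\in\mathbb N$ and $A\in\mathrm{Rec}_{p\times q}(\mathbb C)$. Then there exists a constant $C\ge0$ such that $|A[U,W]|\le C^{n+1}$ for all $n\in\mathbb N$ and all $(U,W)\in\mathcal M_{p\times q}^n$.
   Context: $\mathcal M_{p\times q}^n$ is the set of pairs $(U,W)$ of words of common length $n$ with $U\in\{0,\dots,p-1\}^n$, $W\in\{0,\dots,q-1\}^n$, and $\mathcal M_{p\times q}=\bigcup_n\mathcal M_{p\times q}^n$. For $A:\mathcal M_{p\times q}\to\mathbb C$ (values written $A[U,W]$) and $(S,T)\in\mathcal M_{p\times q}$, $(\rho(S,T)A)[U,W]=A[US,WT]$. $\mathrm{Rec}_{p\times q}(\mathbb C)$ is the set of $A$ such that the linear span of $\{\rho(S,T)A:(S,T)\in\mathcal M_{p\times q}\}$ is finite-dimensional. *)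

(* Defs.v *)
(* complex numbers are R[i] = complex R (mathcomp-real-closed)
   over an arbitrary R : realType (MathComp-Analysis), i.e. the field C. *)
From HB Require Import structures.
From mathcomp Require Import all_boot all_order all_algebra.
From mathcomp Require Import reals complex.
Set Implicit Arguments. Unset Strict Implicit. Unset Printing Implicit Defensive.
Import GRing.Theory Num.Theory.
Local Open Scope ring_scope.

Definition Mpq (p q : nat) : Type :=
  {x : seq 'I_p * seq 'I_q | size x.1 == size x.2}.

Definition mlen p q (x : Mpq p q) : nat := size (sval x).1.

Lemma cat_pair_size p q (x y : Mpq p q) :
  size ((sval x).1 ++ (sval y).1) == size ((sval x).2 ++ (sval y).2).
Proof.
case: x => [[u w] /= /eqP Hx]; case: y => [[s t] /= /eqP Hy].
by rewrite !size_cat Hx Hy.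
Qed.

Definition mcat p q (x y : Mpq p q) : Mpq p q :=
  exist _ ((sval x).1 ++ (sval y).1, (sval x).2 ++ (sval y).2)
        (cat_pair_size x y).

Definition rho p q (K : Type) (st : Mpq p q) (A : Mpq p q -> K) : Mpq p q -> K :=
  fun uw => A (mcat uw st).

(* Rec_{p x q}(C): the linear span of { rho(S,T) A } is finite-dimensional,
   i.e. it is contained in the span of finitely many functions B_0..B_{k-1}. *)
Definition Rec (R : realType) p q (A : Mpq p q -> R[i]) : Prop :=
  exists (k : nat) (B : 'I_k -> Mpq p q -> R[i]),
    forall st : Mpq p q, exists c : 'I_k -> R[i],
      forall uw : Mpq p q, rho st A uw = \sum_(j < k) c j * B j uw.

(* Main.v *)
Require Import Defs.
From mathcomp Require Import all_boot all_order all_algebra.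
From mathcomp Require Import reals complex.
From mathcomp Require Import zify.
From Stdlib Require Import Classical_Prop.
Import Order.TTheory GRing.Theory Num.Theory.
Local Open Scope ring_scope.

Section Aux.
Variables (p q : nat).

Definition eps : Mpq p q := exist _ ([::], [::]) isT.
Definition letter (x : 'I_p) (y : 'I_q) : Mpq p q := exist _ ([:: x], [:: y]) isT.

Lemma Mpq_eq (u v : Mpq p q) : sval u = sval v -> u = v.
Proof.
case: u => a Ha; case: v => b Hb /= E; subst b.
by rewrite (bool_irrelevance Ha Hb).
Qed.

Lemma mcatA (u v w : Mpq p q) : mcat (mcat u v) w = mcat u (mcat v w).
Proof. by apply: Mpq_eq => /=; rewrite !catA. Qed.

Lemma mcat0 (u : Mpq p q) : mcat u eps = u.
Proof. by apply: Mpq_eq => /=; rewrite !cats0; case: (sval u). Qed.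

Lemma mlen0 (u : Mpq p q) : mlen u = 0%N -> u = eps.
Proof.
case: u => [[a b] H]; rewrite /mlen /= => /size0nil Ha; subst a.
apply: Mpq_eq => /=; move: H => /= /eqP /esym /size0nil -> //.
Qed.

Lemma rcons_dec (T : Type) (a : seq T) n : size a = n.+1 ->
  exists a' x, a = rcons a' x /\ size a' = n.
Proof.
case/lastP: a => [|a x] //; rewrite size_rcons => [[Hn]].
by exists a, x.
Qed.

Lemma mlenS (u : Mpq p q) n : mlen u = n.+1 ->
  exists u' x y, mlen u' = n /\ u = mcat u' (letter x y).
Proof.
case: u => [[a b] H]; rewrite /mlen /= => Ha.
have Hb : size b = n.+1 by move/eqP: H => /= <-.
have [a' [x [Ea Sa]]] := rcons_dec _ _ _ Ha.
have [b' [y [Eb Sb]]] := rcons_dec _ _ _ Hb.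
have H' : size (a', b').1 == size (a', b').2 by rewrite /= Sa Sb.
exists (exist _ (a', b') H'), x, y; split; first by [].
by apply: Mpq_eq => /=; rewrite Ea Eb !cats1.
Qed.
End Aux.
Section Bound.
Variables (R : realType) (p q m : nat) (A : Mpq p q -> R[i]) (sw : 'I_m -> Mpq p q).
Hypothesis HA : forall s, exists lam : 'I_m -> R[i],
  forall uw, A (mcat uw s) = \sum_i lam i * A (mcat uw (sw i)).

Lemma term_le_sum (T : finType) (G : T -> R[i]) t0 :
  (forall t, 0 <= G t) -> G t0 <= \sum_t G t.
Proof.
move=> G0; rewrite (bigD1 t0) //= lerDl; exact: sumr_ge0.
Qed.

Lemma bound_main : exists C : R[i], 0 <= C /\
    forall (n : nat) (uw : Mpq p q), mlen uw = n -> `|A uw| <= C ^+ n.+1.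
Proof.
have [lam Hlam] := fin_all_exists
  (fun t : 'I_p * 'I_q * 'I_m => HA (mcat (@letter p q t.1.1 t.1.2) (sw t.2))).
have [lam0 H0] := HA (eps p q).
pose K := \sum_t \sum_j `|lam t j|.
pose M0 := \sum_i `|A (mcat (eps p q) (sw i))|.
pose D := \sum_j `|lam0 j|.
have K0 : 0 <= K by apply: sumr_ge0 => t _; apply: sumr_ge0.
have M00 : 0 <= M0 by apply: sumr_ge0.
have D0 : 0 <= D by apply: sumr_ge0.
have claim : forall n uw, mlen uw = n ->
    forall i, `|A (mcat uw (sw i))| <= M0 * K ^+ n.
  elim=> [|n IH] uw Hl i.
    rewrite (mlen0 _ _ _ Hl) expr0 mulr1.
    rewrite /M0; apply: (@term_le_sum _ (fun i => `|A (mcat (eps p q) (sw i))|) i) => j //=.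
  have [u' [x [y [Hl' ->]]]] := mlenS _ _ _ _ Hl.
  rewrite mcatA (Hlam (x, y, i)) /=.
  apply: le_trans (ler_norm_sum _ _ _) _.
  apply: (@le_trans _ _ (\sum_j `|lam (x, y, i) j| * (M0 * K ^+ n))).
    apply: ler_sum => j _; rewrite normrM; apply: ler_wpM2l => //.
    exact: IH.
  rewrite -mulr_suml exprS [X in _ <= X]mulrCA.
  apply: ler_wpM2r; first by apply: mulr_ge0 => //; apply: exprn_ge0.
  by apply: (@term_le_sum _ (fun t => \sum_j `|lam t j|)) => t; apply: sumr_ge0.
exists (1 + K + D * M0); split.
  by apply: addr_ge0; [apply: addr_ge0|apply: mulr_ge0].
move=> n uw Hl.
rewrite -[uw]mcat0 H0.
apply: le_trans (ler_norm_sum _ _ _) _.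
apply: (@le_trans _ _ (\sum_j `|lam0 j| * (M0 * K ^+ n))).
  apply: ler_sum => j _; rewrite normrM; apply: ler_wpM2l => //.
  exact: claim.
rewrite -mulr_suml mulrA exprS.
have C0 : 0 <= 1 + K by apply: addr_ge0.
apply: ler_pM.
- by apply: mulr_ge0.
- by apply: exprn_ge0.
- have := lerDr (D * M0) (1 + K); rewrite C0 => H; exact: (idP H).
- apply: lerXn2r; rewrite ?inE //; first by apply: addr_ge0; [apply: addr_ge0|apply: mulr_ge0].
  by rewrite addrAC lerDr; apply: addr_ge0 => //; apply: mulr_ge0.
Qed.
End Bound.
Section Span.
Variables (R : realType) (p q k : nat) (A : Mpq p q -> R[i]) (B : 'I_k -> Mpq p q -> R[i]).
Hypothesis HB : forall st : Mpq p q, exists c : 'I_k -> R[i],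
      forall uw : Mpq p q, rho st A uw = \sum_(j < k) c j * B j uw.

Definition L (v : 'rV[R[i]]_k) uw := \sum_(j < k) v 0 j * B j uw.
Definition wit s v := forall uw, A (mcat uw s) = L v uw.
Definition d0 : Mpq p q * 'rV[R[i]]_k := (eps p q, 0).
Definition good ws := forall i, (i < size ws)%N -> wit (nth d0 ws i).1 (nth d0 ws i).2.
Definition dimw (ws : seq (Mpq p q * 'rV[R[i]]_k)) := \dim <<map snd ws>>%VS.

Lemma L_lin n (a : 'I_n -> R[i]) (x : 'I_n -> 'rV[R[i]]_k) uw :
  L (\sum_i a i *: x i) uw = \sum_i a i * L (x i) uw.
Proof.
rewrite /L; under eq_bigr => j _ do rewrite summxE mulr_suml.
rewrite exchange_big; apply: eq_bigr => i _; rewrite mulr_sumr.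
by apply: eq_bigr => j _; rewrite mxE mulrA.
Qed.

Lemma step ws : good ws ->
  (forall s v, wit s v -> v \in <<map snd ws>>%VS) \/
  exists ws', good ws' /\ (dimw ws < dimw ws')%N.
Proof.
move=> Hg.
case: (classic (forall s v, wit s v -> v \in <<map snd ws>>%VS)) => [Hall|Hn].
  by left.
right.
have [s [v [Hw Hv]]] : exists s v, wit s v /\ v \notin <<map snd ws>>%VS.
  apply: NNPP => Hc; apply: Hn => s v Hw.
  case: (boolP (v \in <<map snd ws>>%VS)) => // Hv.
  by exfalso; apply: Hc; exists s, v.
exists ((s, v) :: ws); split.
  by case=> [|i] //= Hi; apply: Hg.
rewrite /dimw /= span_cons.
rewrite (ltn_leqif (dimv_leqif_eq (addvSr _ _))).
apply/negP => /eqP E; move: Hv; rewrite E.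
by rewrite -span_cons memv_span // mem_head.
Qed.

Lemma exists_good : exists ws, good ws /\
  forall s v, wit s v -> v \in <<map snd ws>>%VS.
Proof.
pose N := \dim (fullv : {vspace 'rV[R[i]]_k}).
have dimN ws : (dimw ws <= N)%N by apply: dimvS; apply: subvf.
suff H : forall r ws, good ws -> (N - dimw ws <= r)%N -> exists ws, good ws /\
  forall s v, wit s v -> v \in <<map snd ws>>%VS.
  by apply: (H N [::]) => //; rewrite leq_subr.
elim=> [|r IH] ws Hg Hr; (case: (step _ Hg) => [Hall|[ws' [Hg' Hlt]]]; first by exists ws).
  by have := dimN ws'; lia.
apply: (IH ws' Hg'); have := dimN ws'; lia.
Qed.

Lemma span_main : exists m (sw : 'I_m -> Mpq p q), forall s, exists lam : 'I_m -> R[i],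
  forall uw, A (mcat uw s) = \sum_i lam i * A (mcat uw (sw i)).
Proof.
have [ws [Hg Hsp]] := exists_good.
exists (size (map snd ws)), (fun i => (nth d0 ws i).1) => s.
have [c Hc] := HB s.
pose v : 'rV[R[i]]_k := \row_j c j.
have Hw : wit s v by move=> uw; rewrite /L; move: (Hc uw); rewrite /rho => ->; apply: eq_bigr => j _; rewrite mxE.
have Hv := Hsp s v Hw.
pose X := in_tuple (map snd ws).
have := coord_span (X := X) Hv => Ev.
exists (fun i => coord X i v) => uw.
rewrite Hw {1}Ev L_lin; apply: eq_bigr => i _; congr (_ * _).
have Hi : (i < size ws)%N by rewrite -(size_map snd); exact: ltn_ord.
by rewrite /= (nth_map d0) // -(Hg i Hi).
Qed.
End Span.

Theorem mainTheorem7 (R : realType) (p q : nat) (A : Mpq p q -> R[i]) :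
  Rec A ->
  exists C : R[i], 0 <= C /\
    forall (n : nat) (uw : Mpq p q), mlen uw = n -> `|A uw| <= C ^+ n.+1.
Proof.
move=> [k [B HB]].
have [m [sw HA]] := @span_main R p q k A B HB.
exact: (@bound_main R p q m A sw HA).
Qed.
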